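(* Let $(H,A,C)$ be a Doi-Hopf datum. For $\theta\in V_3$, the formula $h(\theta)_M(c\otimes m)=\sum m_{<0>}\,\theta(c\otimes m_{<-1>})$ ($M\in{}^C\mathcal M(H)_A$, $c\in C$, $m\in M$) defines a natural transformation $h(\theta):GF\to 1$, and $h:V_3\to V$ is $k$-linear and multiplicative: $h(\theta\bullet\theta')=h(\theta)\bullet h(\theta')$, where on $V_3$ the product is $(\theta\bullet\theta')(c\otimes d)=\sum\theta(c_{(3)}\otimes d)\theta'(c_{(1)}\otimes c_{(2)})$ and on $V$ it is $(\nu\bullet\nu')_M=\nu'_M\circ\rho_M\circ\nu_M$. If $H$ is a Hopf algebra, $h$ is bijective, so $V$ and $V_3$ are isomorphic (not necessarily unital) $k$-algebras.
   Context: Sweedler notation $\Delta(c)=\sum c_{(1)}\otimes c_{(2)}$, $\rho(m)=\sum m_{<-1>}\otimes m_{<0>}$. Doi-Hopf datum $(H,A,C)$: $H$ bialgebra over a commutative ring $k$, $A$ left $H$-comodule algebra, $C$ right $H$-module coalgebra, flat over $k$. ${}^C\mathcal M(H)_A$: right $A$-modules with left $C$-coaction satisfying $\rho_M(ma)=\sum m_{<-1>}\cdot a_{<-1>}\otimes m_{<0>}a_{<0>}$; $F$ forgets the coaction, its right adjoint is $G(N)=C\otimes N$ with $(c\otimes n)a=\sum c\cdot a_{<-1>}\otimes na_{<0>}$, $\rho(c\otimes n)=\sum c_{(1)}\otimes c_{(2)}\otimes n$; the unit is $\rho_M$. $V$ is the set of natural transformations $\nu:GF\to 1$ (families of morphisms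 $\nu_M:C\otimes M\to M$ in ${}^C\mathcal M(H)_A$ natural in $M$). $V_3$ is the set of $k$-linear $\theta:C\otimes C\to A$ with $\theta(c\otimes d)a=\sum a_{<0>}\theta(c\cdot a_{<-2>}\otimes d\cdot a_{<-1>})$ and $\sum c_{(1)}\otimes\theta(c_{(2)}\otimes d)=\sum d_{(2)}\cdot\theta(c\otimes d_{(1)})_{<-1>}\otimes\theta(c\otimes d_{(1)})_{<0>}$ for all $a\in A$, $c,d\in C$. *)

(* Defs.v *)
(* Tensor products over the commutative ring k are not in the
   library; elements of X (x) Y are represented by finite lists of pairs
   (sum of simple tensors; scalars absorbed in the left factor) and equality
   in X (x) Y (resp. X (x) Y (x) Z) is equality after applying every
   bilinear (resp. trilinear) map into every k-module, which is exactly the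
   universal property of the tensor product. *)
From HB Require Import structures.
From mathcomp Require Import all_boot all_algebra.
Set Implicit Arguments. Unset Strict Implicit. Unset Printing Implicit Defensive.
Import GRing.Theory.
Local Open Scope ring_scope.

Section Tensor.
Variable k : comPzRingType.

Definition lin (X Y : lmodType k) (f : X -> Y) : Prop :=
  forall (a : k) (x y : X), f (a *: x + y) = a *: f x + f y.

Definition bilin (X Y Z : lmodType k) (f : X -> Y -> Z) : Prop :=
  (forall y, lin (fun x => f x y)) /\ (forall x, lin (f x)).

Definition trilin (X Y Z W : lmodType k) (f : X -> Y -> Z -> W) : Prop :=
  [/\ (forall y z, lin (fun x => f x y z)),
      (forall x z, lin (fun y => f x y z)) &
      (forall x y, lin (f x y))].

Definition klin (X : lmodType k) (f : X -> k) : Prop :=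
  forall (a : k) (x y : X), f (a *: x + y) = a * f x + f y.

Definition tsum2 (X Y Z : lmodType k) (f : X -> Y -> Z) (s : seq (X * Y)) : Z :=
  \sum_(p <- s) f p.1 p.2.

Definition tsum3 (X Y Z W : lmodType k) (f : X -> Y -> Z -> W)
  (s : seq (X * Y * Z)) : W :=
  \sum_(p <- s) f p.1.1 p.1.2 p.2.

Definition teq2 (X Y : lmodType k) (s t : seq (X * Y)) : Prop :=
  forall (P : lmodType k) (f : X -> Y -> P), bilin f -> tsum2 f s = tsum2 f t.

Definition teq3 (X Y Z : lmodType k) (s t : seq (X * Y * Z)) : Prop :=
  forall (P : lmodType k) (f : X -> Y -> Z -> P), trilin f -> tsum3 f s = tsum3 f t.

(* a k-linear map Z -> X (x) Y, given through representatives *)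
Definition tlin2 (X Y Z : lmodType k) (D : Z -> seq (X * Y)) : Prop :=
  forall (a : k) (z z' : Z),
    teq2 (D (a *: z + z')) ([seq (a *: p.1, p.2) | p <- D z] ++ D z').

Definition flat (X : lmodType k) : Prop :=
  forall (N' N : lmodType k) (i : N' -> N), lin i -> injective i ->
  forall s : seq (X * N'), teq2 [seq (p.1, i p.2) | p <- s] [::] -> teq2 s [::].

Definition coassoc (X M : lmodType k) (Delta : X -> seq (X * X))
  (rho : M -> seq (X * M)) : Prop :=
  forall m, teq3 [seq (q.1, q.2, p.2) | p <- rho m, q <- Delta p.1]
                 [seq (p.1, q.1, q.2) | p <- rho m, q <- rho p.2].

End Tensor.

Record datum (k : comPzRingType) := Datum {
  dH : algType k;
  dA : algType k;
  dC : lmodType k;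
  comH : dH -> seq (dH * dH);
  epsH : dH -> k;
  coA : dA -> seq (dH * dA);
  actC : dC -> dH -> dC;
  comC : dC -> seq (dC * dC);
  epsC : dC -> k;
  comH_lin : tlin2 comH;
  comH_coassoc : coassoc comH comH;
  epsH_lin : klin epsH;
  comH_counitl : forall h : dH, \sum_(p <- comH h) epsH p.1 *: p.2 = h;
  comH_counitr : forall h : dH, \sum_(p <- comH h) epsH p.2 *: p.1 = h;
  comH1 : teq2 (comH 1) [:: (1, 1)];
  comHM : forall g h : dH,
    teq2 (comH (g * h)) [seq (p.1 * q.1, p.2 * q.2) | p <- comH g, q <- comH h];
  epsH1 : epsH 1 = 1;
  epsHM : forall g h : dH, epsH (g * h) = epsH g * epsH h;
  coA_lin : tlin2 coA;
  coA_coassoc : coassoc comH coA;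
  coA_counit : forall a : dA, \sum_(p <- coA a) epsH p.1 *: p.2 = a;
  coA1 : teq2 (coA 1) [:: (1, 1)];
  coAM : forall a b : dA,
    teq2 (coA (a * b)) [seq (p.1 * q.1, p.2 * q.2) | p <- coA a, q <- coA b];
  actC_bilin : bilin actC;
  actC1 : forall c, actC c 1 = c;
  actCM : forall c g h, actC (actC c g) h = actC c (g * h);
  comC_lin : tlin2 comC;
  comC_coassoc : coassoc comC comC;
  epsC_lin : klin epsC;
  comC_counitl : forall c : dC, \sum_(p <- comC c) epsC p.1 *: p.2 = c;
  comC_counitr : forall c : dC, \sum_(p <- comC c) epsC p.2 *: p.1 = c;
  comC_act : forall c h,
    teq2 (comC (actC c h)) [seq (actC p.1 q.1, actC p.2 q.2) | p <- comC c, q <- comH h];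
  epsC_act : forall c h, epsC (actC c h) = epsC c * epsH h;
  C_flat : flat dC
}.

Arguments comH {k} d _.  Arguments epsH {k} d _.  Arguments coA {k} d _.
Arguments actC {k} d _ _.  Arguments comC {k} d _.  Arguments epsC {k} d _.

Definition is_hopf (k : comPzRingType) (D : datum k) : Prop :=
  exists S : dH D -> dH D, lin S /\
    forall h : dH D,
      \sum_(p <- comH D h) S p.1 * p.2 = epsH D h *: 1 /\
      \sum_(p <- comH D h) p.1 * S p.2 = epsH D h *: 1.

Record dhmod (k : comPzRingType) (D : datum k) := DHMod {
  dM : lmodType k;
  actM : dM -> dA D -> dM;
  coM : dM -> seq (dC D * dM);
  actM_bilin : bilin actM;
  actM1 : forall m, actM m 1 = m;
  actMM : forall m a b, actM (actM m a) b = actM m (a * b);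
  coM_lin : tlin2 coM;
  coM_coassoc : coassoc (comC D) coM;
  coM_counit : forall m, \sum_(p <- coM m) epsC D p.1 *: p.2 = m;
  coM_act : forall m a,
    teq2 (coM (actM m a)) [seq (actC D p.1 q.1, actM p.2 q.2) | p <- coM m, q <- coA D a]
}.

Arguments dM {k D} _.  Arguments actM {k D} _ _ _.  Arguments coM {k D} _ _.

Section Nat.
Variables (k : comPzRingType) (D : datum k).

Definition dhmor (M N : dhmod D) (f : dM M -> dM N) : Prop :=
  [/\ lin f,
      (forall m a, f (actM M m a) = actM N (f m) a) &
      (forall m, teq2 (coM N (f m)) [seq (p.1, f p.2) | p <- coM M m])].

(* a family nu_M : C (x) M -> M, given as bilinear maps C x M -> M *)
Definition nat_family := forall M : dhmod D, dC D -> dM M -> dM M.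

(* V : natural transformations GF -> 1.  nu_M is a morphism in ^C M(H)_A
   from G F M = C (x) M (with (c (x) m) a = sum c.a_{-1} (x) m a_0 and
   rho (c (x) m) = sum c_(1) (x) c_(2) (x) m) to M, natural in M. *)
Definition natV (nu : nat_family) : Prop :=
  [/\ (forall M, bilin (nu M)),
      (forall M c m a,
         \sum_(p <- coA D a) nu M (actC D c p.1) (actM M m p.2) = actM M (nu M c m) a),
      (forall M c m,
         teq2 (coM M (nu M c m)) [seq (p.1, nu M p.2 m) | p <- comC D c]) &
      (forall (M N : dhmod D) (f : dM M -> dM N), dhmor f ->
         forall c m, f (nu M c m) = nu N c (f m))].

Definition V3 (theta : dC D -> dC D -> dA D) : Prop :=
  [/\ bilin theta,
      (forall c d a,
         theta c d * a =
         \sum_(p <- coA D a) \sum_(q <- comH D p.1)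
            p.2 * theta (actC D c q.1) (actC D d q.2)) &
      (forall c d,
         teq2 [seq (p.1, theta p.2 d) | p <- comC D c]
              [seq (actC D q.2 r.1, r.2) | q <- comC D d, r <- coA D (theta c q.1)])].

Definition hmap (theta : dC D -> dC D -> dA D) : nat_family :=
  fun M c m => \sum_(p <- coM M m) actM M p.2 (theta c p.1).

Definition prodV3 (theta theta' : dC D -> dC D -> dA D) : dC D -> dC D -> dA D :=
  fun c d => \sum_(p <- comC D c) \sum_(q <- comC D p.1) theta p.2 d * theta' q.1 q.2.

Definition prodV (nu nu' : nat_family) : nat_family :=
  fun M c m => \sum_(p <- coM M (nu M c m)) nu' M p.1 p.2.

End Nat.

Arguments dhmor {k D M N}.  Arguments nat_family {k} D.  Arguments natV {k D}.
Arguments V3 {k D}.  Arguments hmap {k D}.  Arguments prodV3 {k D}.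
Arguments prodV {k D}.

(* Main.v *)
Require Import Defs.
From HB Require Import structures.
From mathcomp Require Import all_boot all_algebra.
From Stdlib Require Import ClassicalEpsilon FunctionalExtensionality PropExtensionality.
Unset Printing Implicit Defensive.
Import GRing.Theory.
Local Open Scope ring_scope.
Set Implicit Arguments. Unset Strict Implicit.

Section Gen.
Variable k : comPzRingType.

Lemma lin0 (X Y : lmodType k) (f : X -> Y) : lin f -> f 0 = 0.
Proof. by move=> fl; have := fl (-1) 0 0; rewrite scaler0 addr0 scaleN1r addNr. Qed.
Lemma linD (X Y : lmodType k) (f : X -> Y) : lin f -> forall x y, f (x + y) = f x + f y.
Proof. by move=> fl x y; rewrite -[x in LHS]scale1r fl scale1r. Qed.
Lemma linZ (X Y : lmodType k) (f : X -> Y) : lin f -> forall a x, f (a *: x) = a *: f x.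
Proof. by move=> fl a x; rewrite -[a *: x]addr0 fl lin0 // addr0. Qed.
Lemma linN (X Y : lmodType k) (f : X -> Y) : lin f -> forall x, f (- x) = - f x.
Proof. by move=> fl x; rewrite -scaleN1r linZ // scaleN1r. Qed.
Lemma lin_sum (X Y : lmodType k) (f : X -> Y) I (s : seq I) (F : I -> X) :
  lin f -> f (\sum_(i <- s) F i) = \sum_(i <- s) f (F i).
Proof.
move=> fl; elim: s => [|i s IH]; first by rewrite !big_nil lin0.
by rewrite !big_cons linD // IH.
Qed.
Lemma lin_comp (X Y Z : lmodType k) (g : Y -> Z) (f : X -> Y) :
  lin g -> lin f -> lin (fun x => g (f x)).
Proof. by move=> gl fl a x y; rewrite fl gl. Qed.
Lemma lin_id (X : lmodType k) : lin (fun x : X => x).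
Proof. by []. Qed.
Lemma lin_sumF (X Y : lmodType k) I (s : seq I) (F : I -> X -> Y) :
  (forall i, lin (F i)) -> lin (fun x => \sum_(i <- s) F i x).
Proof.
move=> Fl a x y; rewrite scaler_sumr -big_split /=.
by apply: eq_bigr => i _; rewrite Fl.
Qed.
Lemma lin_add (X Y : lmodType k) (f g : X -> Y) :
  lin f -> lin g -> lin (fun x => f x + g x).
Proof. by move=> fl gl a x y; rewrite fl gl scalerDr addrACA. Qed.
Lemma lin_scal (X Y : lmodType k) (f : X -> k) (y : Y) :
  klin f -> lin (fun x => f x *: y).
Proof. by move=> fl a x x'; rewrite fl scalerDl scalerA. Qed.

Lemma bil_l (X Y Z : lmodType k) (f : X -> Y -> Z) : bilin f -> forall y, lin (fun x => f x y).
Proof. by case. Qed.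
Lemma bil_r (X Y Z : lmodType k) (f : X -> Y -> Z) : bilin f -> forall x, lin (f x).
Proof. by case. Qed.

Lemma tri1 (X Y Z W : lmodType k) (f : X -> Y -> Z -> W) : trilin f -> forall y z, lin (fun x => f x y z).
Proof. by case. Qed.

Lemma lin_tsum (X Y Z P : lmodType k) (D : Z -> seq (X * Y)) (g : X -> Y -> P) :
  tlin2 D -> bilin g -> lin (fun z => tsum2 g (D z)).
Proof.
move=> Dl gb a z z'; rewrite (Dl a z z' _ _ gb) /tsum2 big_cat big_map /=.
congr (_ + _); rewrite scaler_sumr; apply: eq_bigr => p _.
by rewrite (linZ (bil_l gb p.2)).
Qed.

Lemma mul_bilin (A : algType k) : bilin (fun x y : A => x * y).
Proof.
split=> [y a x x'|x a y y'] /=; first by rewrite mulrDl scalerAl.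
by rewrite mulrDr scalerAr.
Qed.

Lemma teq2_refl (X Y : lmodType k) (s : seq (X * Y)) : teq2 s s.
Proof. by []. Qed.
Lemma teq2_sym (X Y : lmodType k) (s t : seq (X * Y)) : teq2 s t -> teq2 t s.
Proof. by move=> h P f fb; rewrite h. Qed.
Lemma teq2_trans (X Y : lmodType k) (s t u : seq (X * Y)) : teq2 s t -> teq2 t u -> teq2 s u.
Proof. by move=> h1 h2 P f fb; rewrite h1 // h2. Qed.

End Gen.

Lemma lin_sumE (k : comPzRingType) (X Y : lmodType k) (f : X -> Y) : lin f ->
  forall I (s : seq I) (F : I -> X), f (\sum_(i <- s) F i) = \sum_(i <- s) f (F i).
Proof. by move=> fl I s F; apply: lin_sum. Qed.
Lemma sum_lin (k : comPzRingType) (Y : lmodType k) I (s : seq I) (F G : I -> Y) a :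
  \sum_(i <- s) (a *: F i + G i) = a *: \sum_(i <- s) F i + \sum_(i <- s) G i.
Proof. by rewrite big_split scaler_sumr. Qed.

Unset Implicit Arguments.

Section DH.
Variables (k : comPzRingType) (D : datum k).
Local Notation C := (dC D).
Local Notation A := (dA D).
Local Notation H := (dH D).

Lemma actC_l h : lin (fun c => actC D c h). Proof. exact: bil_l (actC_bilin D) h. Qed.
Lemma actC_r c : lin (actC D c). Proof. exact: bil_r (actC_bilin D) c. Qed.
Lemma actM_l (M : dhmod D) a : lin (fun m => actM M m a). Proof. exact: bil_l (actM_bilin M) a. Qed.
Lemma actM_r (M : dhmod D) m : lin (actM M m). Proof. exact: bil_r (actM_bilin M) m. Qed.
Lemma mul_l (b : A) : lin (fun x : A => x * b). Proof. exact: bil_l (mul_bilin A) b. Qed.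
Lemma mul_r (b : A) : lin (fun x : A => b * x). Proof. exact: bil_r (mul_bilin A) b. Qed.

Variable theta : C -> C -> A.
Hypothesis thb : bilin theta.
Lemma th_l d : lin (fun c => theta c d). Proof. exact: bil_l thb d. Qed.
Lemma th_r c : lin (theta c). Proof. exact: bil_r thb c. Qed.

Lemma hmap_bilin M : bilin (hmap theta M).
Proof.
split=> [m | c] a x y; rewrite /hmap.
  by rewrite -sum_lin; apply: eq_bigr => p _; rewrite th_l actM_r.
have gb : bilin (fun x y => actM M y (theta c x)).
  by split=> [y' | x'] b u v /=; rewrite ?th_r ?actM_r ?actM_l.
exact: (lin_tsum (@coM_lin _ _ M) gb a x y).
Qed.

Hypothesis th2 : forall c d a,
         theta c d * a =
         \sum_(p <- coA D a) \sum_(q <- comH D p.1)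
            p.2 * theta (actC D c q.1) (actC D d q.2).
Hypothesis th3 : forall c d,
         teq2 [seq (p.1, theta p.2 d) | p <- comC D c]
              [seq (actC D q.2 r.1, r.2) | q <- comC D d, r <- coA D (theta c q.1)].

Lemma hmap_act M c m a :
  \sum_(p <- coA D a) hmap theta M (actC D c p.1) (actM M m p.2) = actM M (hmap theta M c m) a.
Proof.
rewrite /hmap.
transitivity (\sum_(p <- coA D a) \sum_(r <- coM M m) \sum_(s <- coA D p.2)
   actM M (actM M r.2 s.2) (theta (actC D c p.1) (actC D r.1 s.1))).
  apply: eq_bigr => p _.
  have gb : bilin (fun x y => actM M y (theta (actC D c p.1) x)).
    by split=> [y' | x'] b u v /=; rewrite ?actC_r ?th_r ?actM_r ?actM_l.
  by have := coM_act m p.2 gb; rewrite /tsum2 big_allpairs_dep.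
rewrite exchange_big /= (lin_sumE (actM_l M a)); apply: eq_bigr => r _.
rewrite actMM th2.
have tb : trilin (fun h1 h2 b => actM M r.2 (b * theta (actC D c h1) (actC D r.1 h2))).
  by split=> [y z|x z|x y] b u v /=; rewrite ?actC_r ?th_r ?th_l ?mul_r ?mul_l ?actM_r.
have := coA_coassoc a tb; rewrite /tsum3 !big_allpairs_dep /= => E.
under eq_bigr => p _ do under eq_bigr => s _ do rewrite actMM.
rewrite -E (lin_sumE (actM_r M r.2)); apply: eq_bigr => p _.
by rewrite (lin_sumE (actM_r M r.2)).
Qed.


Lemma hmap_co M c m :
  teq2 (coM M (hmap theta M c m)) [seq (p.1, hmap theta M p.2 m) | p <- comC D c].
Proof.
move=> P f fb.
have Ll : lin (fun z => tsum2 f (coM M z)) := lin_tsum (@coM_lin _ _ M) fb.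
transitivity (\sum_(r <- coM M m) \sum_(s <- coM M r.2) \sum_(t <- coA D (theta c r.1))
   f (actC D s.1 t.1) (actM M s.2 t.2)).
  rewrite /hmap (lin_sumE Ll); apply: eq_bigr => r _.
  by have := coM_act r.2 (theta c r.1) fb; rewrite /tsum2 big_allpairs_dep.
have tb : trilin (fun x y z => \sum_(t <- coA D (theta c x)) f (actC D y t.1) (actM M z t.2)).
  split=> [y z|x z|x y] b u v /=.
  - have gb : bilin (fun h b => f (actC D y h) (actM M z b)).
      by split=> [y' | x'] b' u' v' /=; rewrite ?actC_r ?actM_r ?(bil_l fb) ?(bil_r fb).
    rewrite th_r; exact: (lin_tsum (@coA_lin _ D) gb b _ _).
  - by rewrite -sum_lin; apply: eq_bigr => t _; rewrite actC_l (bil_l fb).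
  - by rewrite -sum_lin; apply: eq_bigr => t _; rewrite actM_l (bil_r fb).
have := coM_coassoc m tb; rewrite /tsum3 !big_allpairs_dep /= => E.
rewrite -E.
transitivity (\sum_(p <- coM M m) \sum_(u <- comC D c) f u.1 (actM M p.2 (theta u.2 p.1))).
  apply: eq_bigr => p _.
  have Fb : bilin (fun x b => f x (actM M p.2 b)).
    by split=> [y' | x'] b' u' v' /=; rewrite ?actM_r ?(bil_l fb) ?(bil_r fb).
  by have := th3 c p.1 _ _ Fb; rewrite /tsum2 big_map big_allpairs_dep /= => ->.
rewrite exchange_big /tsum2 big_map /=; apply: eq_bigr => u _.
by rewrite /hmap (lin_sumE (bil_r fb u.1)).
Qed.

Lemma hmap_nat (M N : dhmod D) (f : dM M -> dM N) : dhmor f ->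
  forall c m, f (hmap theta M c m) = hmap theta N c (f m).
Proof.
case=> fl fa fc c m; rewrite /hmap (lin_sumE fl).
have gb : bilin (fun x y => actM N y (theta c x)).
  by split=> [y' | x'] b u v /=; rewrite ?th_r ?actM_r ?actM_l.
have := fc m _ _ gb; rewrite /tsum2 big_map /= => ->.
by apply: eq_bigr => r _; rewrite fa.
Qed.

End DH.

Lemma hmap_lin k (D : datum k) (a : k) (theta theta' : dC D -> dC D -> dA D) M c m :
  hmap (fun x y => a *: theta x y + theta' x y) M c m
  = a *: hmap theta M c m + hmap theta' M c m.
Proof. by rewrite /hmap -sum_lin; apply: eq_bigr => r _; rewrite actM_r. Qed.


Lemma natV_hmap k (D : datum k) (theta : dC D -> dC D -> dA D) : V3 theta -> natV (hmap theta).
Proof.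
case=> thb th2 th3; split.
- exact: hmap_bilin _ _ _ thb.
- by move=> M c m a; apply: (hmap_act _ _ _ thb th2).
- by move=> M c m; exact: (hmap_co _ _ _ thb th3 M c m).
- by move=> M N f fm c m; exact: (hmap_nat _ _ _ thb _ _ _ fm c m).
Qed.

Lemma hmap_prod k (D : datum k) (theta theta' : dC D -> dC D -> dA D) : V3 theta -> V3 theta' ->
  forall (M : dhmod D) c m,
  hmap (prodV3 theta theta') M c m = prodV (hmap theta) (hmap theta') M c m.
Proof.
case=> thb th2 th3 [thb' th2' th3'] M c m.
rewrite /prodV.
have := hmap_co _ _ _ thb th3 M c m _ (hmap theta' M) (hmap_bilin _ _ _ thb' M).
rewrite /tsum2 big_map /= => ->.
transitivity (\sum_(u <- comC D c) \sum_(w <- comC D u.2) \sum_(r <- coM M m)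
   actM M r.2 (theta w.2 r.1 * theta' u.1 w.1)); last first.
  apply: eq_bigr => u _.
  have gb : bilin (fun x y => actM M y (theta' u.1 x)).
    by split=> [y' | x'] b u' v /=; rewrite ?(th_r _ _ _ thb') ?actM_r ?actM_l.
  symmetry; rewrite {1}/hmap.
  have := hmap_co _ _ _ thb th3 M u.2 m _ _ gb; rewrite /tsum2 big_map /= => ->.
  symmetry; apply: eq_bigr => w _; rewrite /hmap (lin_sumE (actM_l _ _ _ _)).
  by apply: eq_bigr => r _; rewrite actMM.
rewrite /hmap /prodV3.
under eq_bigr => r _ do rewrite (lin_sumE (actM_r _ _ _ _)).
rewrite exchange_big /=.
under eq_bigr => p _ do under eq_bigr => r _ do rewrite (lin_sumE (actM_r _ _ _ _)).
under eq_bigr => p _ do rewrite exchange_big /=.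
have tb : trilin (fun x y z => \sum_(r <- coM M m) actM M r.2 (theta z r.1 * theta' x y)).
  split=> [y z|x z|x y] b u v /=; rewrite -sum_lin; apply: eq_bigr => r _.
  - by rewrite (th_l _ _ _ thb') mul_r actM_r.
  - by rewrite (th_r _ _ _ thb') mul_r actM_r.
  - by rewrite (th_l _ _ _ thb) mul_l actM_r.
by have := comC_coassoc c tb; rewrite /tsum3 !big_allpairs_dep /= => ->.
Qed.

Set Implicit Arguments. Unset Strict Implicit.

Section Tensor.
Variables (k : comPzRingType) (X Y : lmodType k).

Definition trep (s : seq (X * Y)) : seq (X * Y) :=
  epsilon (inhabits [::]) (fun t => teq2 s t).

Lemma trepP s : teq2 s (trep s).
Proof. by apply: (epsilon_spec (inhabits [::]) (fun t => teq2 s t)); exists s. Qed.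

Lemma trep_eq s t : teq2 s t -> trep s = trep t.
Proof.
move=> st; rewrite /trep.
have -> : (fun u => teq2 s u) = (fun u => teq2 t u); last by [].
apply: functional_extensionality => u; apply: propositional_extensionality.
split=> h; first exact: teq2_trans (teq2_sym st) h.
exact: teq2_trans st h.
Qed.

Lemma trep_idem s : trep (trep s) = trep s.
Proof. exact/trep_eq/teq2_sym/trepP. Qed.

Record tens := Tens { tvl : seq (X * Y); tvalP : trep tvl == tvl }.
HB.instance Definition _ := [isSub for tvl].
HB.instance Definition _ := [Choice of tens by <:].

Definition tcl (s : seq (X * Y)) : tens := @Tens (trep s) (introT eqP (trep_idem s)).

Lemma tcl_eq s t : teq2 s t -> tcl s = tcl t.
Proof. by move=> st; apply: val_inj => /=; apply: trep_eq. Qed.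
Lemma tvl_tcl s : teq2 (tvl (tcl s)) s.
Proof. exact/teq2_sym/trepP. Qed.
Lemma tcl_tvl x : tcl (tvl x) = x.
Proof. by apply: val_inj => /=; apply/eqP; case: x. Qed.

Lemma tsum2_tcl (P : lmodType k) (f : X -> Y -> P) s : bilin f -> tsum2 f (tvl (tcl s)) = tsum2 f s.
Proof. by move=> fb; apply: tvl_tcl. Qed.
Lemma tsum2_cat (P : lmodType k) (f : X -> Y -> P) s t : tsum2 f (s ++ t) = tsum2 f s + tsum2 f t.
Proof. by rewrite /tsum2 big_cat. Qed.
Lemma tsum2_scale (P : lmodType k) (f : X -> Y -> P) a s : bilin f ->
  tsum2 f [seq (a *: p.1, p.2) | p <- s] = a *: tsum2 f s.
Proof.
move=> fb; rewrite /tsum2 big_map scaler_sumr; apply: eq_bigr => p _.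
by rewrite (linZ (bil_l fb p.2)).
Qed.
Lemma tsum2_nil (P : lmodType k) (f : X -> Y -> P) : tsum2 f [::] = 0.
Proof. by rewrite /tsum2 big_nil. Qed.

Definition tadd (x y : tens) := tcl (tvl x ++ tvl y).
Definition tzero := tcl [::].
Definition tscale (a : k) (x : tens) := tcl [seq (a *: p.1, p.2) | p <- tvl x].
Definition topp x := tscale (-1) x.

Ltac tsimp := move=> P f fb; rewrite ?tsum2_cat ?tsum2_scale ?tsum2_tcl ?tsum2_cat ?tsum2_scale ?tsum2_tcl ?tsum2_cat ?tsum2_scale ?tsum2_tcl ?tsum2_nil //.

Lemma taddA : associative tadd.
Proof. by move=> x y z; apply: tcl_eq; tsimp; rewrite addrA. Qed.
Lemma taddC : commutative tadd.
Proof. by move=> x y; apply: tcl_eq; tsimp; rewrite addrC. Qed.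
Lemma tadd0 : left_id tzero tadd.
Proof. by move=> x; rewrite -[RHS]tcl_tvl; apply: tcl_eq; tsimp; rewrite add0r. Qed.
Lemma taddN : left_inverse tzero topp tadd.
Proof. by move=> x; apply: tcl_eq; tsimp; rewrite scaleN1r addNr. Qed.

HB.instance Definition _ := GRing.isZmodule.Build tens taddA taddC tadd0 taddN.

Lemma tscaleA a b x : tscale a (tscale b x) = tscale (a * b) x.
Proof. by apply: tcl_eq; tsimp; rewrite scalerA. Qed.
Lemma tscale1 : left_id 1 tscale.
Proof. by move=> x; rewrite -[RHS]tcl_tvl; apply: tcl_eq; tsimp; rewrite scale1r. Qed.
Lemma tscaleDr : right_distributive tscale tadd.
Proof. by move=> a x y; apply: tcl_eq; tsimp; rewrite scalerDr. Qed.
Lemma tscaleDl v : {morph tscale^~ v : a b / a + b >-> tadd a b}.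
Proof. by move=> a b; apply: tcl_eq; tsimp; rewrite scalerDl. Qed.

HB.instance Definition _ := GRing.Zmodule_isLmodule.Build k tens tscaleA tscale1 tscaleDr tscaleDl.

Lemma taddE (x y : tens) : x + y = tcl (tvl x ++ tvl y). Proof. by []. Qed.
Lemma tscaleE a (x : tens) : a *: x = tcl [seq (a *: p.1, p.2) | p <- tvl x]. Proof. by []. Qed.
Lemma tzeroE : (0 : tens) = tcl [::]. Proof. by []. Qed.

Definition tt (x : X) (y : Y) : tens := tcl [:: (x, y)].
Definition tlift (P : lmodType k) (f : X -> Y -> P) (z : tens) : P := tsum2 f (tvl z).

Lemma tlift_tcl (P : lmodType k) (f : X -> Y -> P) s : bilin f -> tlift f (tcl s) = tsum2 f s.
Proof. exact: tsum2_tcl. Qed.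
Lemma tlift_tt (P : lmodType k) (f : X -> Y -> P) x y : bilin f -> tlift f (tt x y) = f x y.
Proof. by move=> fb; rewrite tlift_tcl // /tsum2 big_seq1. Qed.
Lemma tlift_lin (P : lmodType k) (f : X -> Y -> P) : bilin f -> lin (tlift f).
Proof. by move=> fb a x y; rewrite /tlift taddE tscaleE ?tsum2_tcl ?tsum2_cat ?tsum2_tcl ?tsum2_scale. Qed.

Lemma tcl_cat s t : tcl (s ++ t) = tcl s + tcl t.
Proof. by rewrite taddE; apply: tcl_eq; tsimp. Qed.
Lemma tcl_sum s : tcl s = \sum_(p <- s) tt p.1 p.2.
Proof.
elim: s => [|p s IH]; first by rewrite big_nil tzeroE.
by rewrite big_cons -IH /tt -tcl_cat; case: p.
Qed.
Lemma tens_sum (x : tens) : x = \sum_(p <- tvl x) tt p.1 p.2.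
Proof. by rewrite -tcl_sum tcl_tvl. Qed.

Lemma tt_bilin : bilin tt.
Proof.
split=> [y | x] a u v; rewrite /tt taddE tscaleE; apply: tcl_eq; tsimp;
  rewrite /tsum2 !big_seq1 /=.
  by rewrite (bil_l fb).
by rewrite (bil_r fb).
Qed.

Lemma lin_tens (P : lmodType k) (g : tens -> P) x : lin g -> g x = \sum_(p <- tvl x) g (tt p.1 p.2).
Proof. by move=> gl; rewrite {1}(tens_sum x) (lin_sumE gl). Qed.

Lemma lin_ext (P : lmodType k) (g1 g2 : tens -> P) : lin g1 -> lin g2 ->
  (forall x y, g1 (tt x y) = g2 (tt x y)) -> forall z, g1 z = g2 z.
Proof.
move=> l1 l2 e z; rewrite (lin_tens z l1) (lin_tens z l2).
by apply: eq_bigr => p _; apply: e.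
Qed.

Lemma tlift_sum (P : lmodType k) (f : X -> Y -> P) z : tlift f z = \sum_(p <- tvl z) f p.1 p.2.
Proof. by []. Qed.

End Tensor.

Set Implicit Arguments. Unset Strict Implicit.

Section G.
Variables (k : comPzRingType) (D : datum k).
Local Notation C := (dC D).
Local Notation A := (dA D).
Variables (N : lmodType k) (actN : N -> A -> N).
Hypotheses (actNb : bilin actN) (actN1 : forall n, actN n 1 = n)
  (actNM : forall n a b, actN (actN n a) b = actN n (a * b)).
Local Notation T := (tens C N).

Definition phiA (a : A) (c : C) (n : N) : T :=
  \sum_(q <- coA D a) tt (actC D c q.1) (actN n q.2).

Lemma phiA_bilin a : bilin (phiA a).
Proof.
split=> [n|c] b u v; rewrite /phiA -sum_lin; apply: eq_bigr => q _.
  by rewrite actC_l (bil_l (tt_bilin C N)).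
by rewrite (bil_l actNb) (bil_r (tt_bilin C N)).
Qed.

Definition actG (x : T) (a : A) : T := tlift (phiA a) x.
Lemma actG_tt c n a : actG (tt c n) a = phiA a c n.
Proof. exact: tlift_tt (phiA_bilin a). Qed.

Lemma actG_bilin : bilin actG.
Proof.
split=> [a | x]; first exact: tlift_lin (phiA_bilin a).
move=> b a a'; rewrite /actG !tlift_sum -sum_lin; apply: eq_bigr => p _.
have gb : bilin (fun h m => tt (actC D p.1 h) (actN p.2 m)).
  split=> [y|y] b' u v /=; first by rewrite actC_r (bil_l (tt_bilin C N)).
  by rewrite (bil_r actNb) (bil_r (tt_bilin C N)).
exact: (lin_tsum (@coA_lin _ D) gb b a a').
Qed.

Lemma actG1 x : actG x 1 = x.
Proof.
rewrite {2}(tens_sum x) /actG tlift_sum; apply: eq_bigr => p _; rewrite /phiA.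
have gb : bilin (fun h m => tt (actC D p.1 h) (actN p.2 m)).
  split=> [y|y] b' u v /=; first by rewrite actC_r (bil_l (tt_bilin C N)).
  by rewrite (bil_r actNb) (bil_r (tt_bilin C N)).
by have := coA1 gb; rewrite /tsum2 big_seq1 /= actC1 actN1.
Qed.

Lemma actGM x a b : actG (actG x a) b = actG x (a * b).
Proof.
have l1 : lin (fun x => actG (actG x a) b).
  exact: lin_comp (bil_l actG_bilin b) (bil_l actG_bilin a).
apply: (lin_ext l1 (bil_l actG_bilin (a * b))) => c n /=.
rewrite !actG_tt /phiA (lin_sumE (bil_l actG_bilin b)).
have gb : bilin (fun h m => tt (actC D c h) (actN n m)).
  split=> [y|y] b' u v /=; first by rewrite actC_r (bil_l (tt_bilin C N)).
  by rewrite (bil_r actNb) (bil_r (tt_bilin C N)).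
have := coAM a b gb; rewrite /tsum2 big_allpairs_dep /= => ->.
apply: eq_bigr => q _; rewrite actG_tt /phiA; apply: eq_bigr => r _.
by rewrite actCM actNM.
Qed.

Definition coG (x : T) : seq (C * T) :=
  [seq (q.1, tt q.2 p.2) | p <- tvl x, q <- comC D p.1].
Definition gf (P : lmodType k) (f : C -> T -> P) (c : C) (n : N) : P :=
  \sum_(q <- comC D c) f q.1 (tt q.2 n).

Lemma gf_bilin (P : lmodType k) (f : C -> T -> P) : bilin f -> bilin (gf f).
Proof.
move=> fb; split=> [n|c] b u v.
  have gb : bilin (fun c1 c2 => f c1 (tt c2 n)).
    split=> [y|y] b' u' v' /=; first by rewrite (bil_l fb).
    by rewrite (bil_l (tt_bilin C N)) (bil_r fb).
  exact: (lin_tsum (@comC_lin _ D) gb b u v).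
rewrite /gf -sum_lin; apply: eq_bigr => q _.
by rewrite (bil_r (tt_bilin C N)) (bil_r fb).
Qed.

Lemma coG_sum (P : lmodType k) (f : C -> T -> P) x : tsum2 f (coG x) = tlift (gf f) x.
Proof. by rewrite /tsum2 /coG big_allpairs_dep. Qed.

Lemma coG_tt (P : lmodType k) (f : C -> T -> P) c n : bilin f -> tsum2 f (coG (tt c n)) = gf f c n.
Proof. by move=> fb; rewrite coG_sum tlift_tt //; apply: gf_bilin. Qed.

Lemma coG_lin : tlin2 coG.
Proof.
move=> a x y P f fb; rewrite coG_sum tsum2_cat tsum2_scale // !coG_sum.
exact: (tlift_lin (gf_bilin fb) a x y).
Qed.

Lemma coG_tt' (P : lmodType k) (f : C -> T -> P) c n : bilin f ->
  \sum_(r <- coG (tt c n)) f r.1 r.2 = gf f c n.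
Proof. exact: coG_tt. Qed.

Lemma coG_coassoc : coassoc (comC D) coG.
Proof.
move=> x P f fb; case: (fb) => f1 f2 f3.
rewrite /tsum3 !big_allpairs_dep /=.
have fcb : forall c, bilin (f c) by move=> c; split=> [y|y]; [exact: f2 | exact: f3].
apply: eq_bigr => p _.
under [RHS]eq_bigr => q _ do rewrite (coG_tt' _ _ (fcb q.1)) /gf.
have tb : trilin (fun y1 y2 y3 => f y1 y2 (tt y3 p.2)).
  split=> [y z|y z|y z] b u v /=; first exact: f1; first exact: f2.
  by rewrite (bil_l (tt_bilin C N)) f3.
by have := comC_coassoc p.1 tb; rewrite /tsum3 !big_allpairs_dep /=.
Qed.

Lemma coG_counit x : \sum_(p <- coG x) epsC D p.1 *: p.2 = x.
Proof.
have fb : bilin (fun (c : C) (t : T) => epsC D c *: t).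
  split=> [t|c] b u v /=; first by rewrite (@epsC_lin _ D) scalerDl scalerA.
  by rewrite scalerDr scalerA mulrC -scalerA.
transitivity (tsum2 (fun (c : C) (t : T) => epsC D c *: t) (coG x)); first by [].
rewrite coG_sum tlift_sum {2}(tens_sum x); apply: eq_bigr => p _; rewrite /gf.
under eq_bigr => q _ do rewrite -(linZ (bil_l (tt_bilin C N) p.2)).
by rewrite -(lin_sumE (bil_l (tt_bilin C N) p.2)) comC_counitl.
Qed.


Lemma coG_act x a :
  teq2 (coG (actG x a)) [seq (actC D p.1 q.1, actG p.2 q.2) | p <- coG x, q <- coA D a].
Proof.
move=> P f fb.
pose F3 c t := \sum_(q <- coA D a) f (actC D c q.1) (actG t q.2).
have F3b : bilin F3.
  split=> [t|c] b u v; rewrite /F3 -sum_lin; apply: eq_bigr => q _.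
  - by rewrite actC_l (bil_l fb).
  - by rewrite (bil_l actG_bilin) (bil_r fb).
rewrite coG_sum.
transitivity (tlift (gf F3) x); last by rewrite /tsum2 big_allpairs_dep -[RHS]/(tsum2 F3 (coG x)) coG_sum.
have l1 : lin (fun x => tlift (gf f) (actG x a)).
  exact: lin_comp (tlift_lin (gf_bilin fb)) (bil_l actG_bilin a).
apply: (lin_ext l1 (tlift_lin (gf_bilin F3b))) => c n /=.
have tgf : forall (P' : lmodType k) (g : C -> T -> P') c' n', bilin g ->
  tlift (gf g) (tt c' n') = gf g c' n'.
  by move=> P' g c' n' gb; apply: tlift_tt; apply: gf_bilin.
rewrite actG_tt tgf // /phiA (lin_sumE (tlift_lin (gf_bilin fb))).
under eq_bigr => q _ do rewrite tgf // /gf.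
transitivity (\sum_(q <- coA D a) \sum_(s <- comC D c) \sum_(t <- comH D q.1)
   f (actC D s.1 t.1) (tt (actC D s.2 t.2) (actN n q.2))).
  apply: eq_bigr => q _.
  have gb : bilin (fun y1 y2 => f y1 (tt y2 (actN n q.2))).
    split=> [y|y] b u v /=; first by rewrite (bil_l fb).
    by rewrite (bil_l (tt_bilin C N)) (bil_r fb).
  by have := comC_act c q.1 gb; rewrite /tsum2 big_allpairs_dep /= => ->.
rewrite exchange_big /gf; apply: eq_bigr => s _; rewrite /F3.
under [RHS]eq_bigr => q _ do rewrite actG_tt /phiA (lin_sumE (bil_r fb _)).
have tb : trilin (fun h1 h2 b => f (actC D s.1 h1) (tt (actC D s.2 h2) (actN n b))).
  split=> [y z|y z|y z] b u v /=.
  - by rewrite actC_r (bil_l fb).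
  - by rewrite actC_r (bil_l (tt_bilin C N)) (bil_r fb).
  - by rewrite (bil_r actNb) (bil_r (tt_bilin C N)) (bil_r fb).
by have := coA_coassoc a tb; rewrite /tsum3 !big_allpairs_dep /=.
Qed.

Definition GN : dhmod D := DHMod actG_bilin actG1 actGM coG_lin coG_coassoc coG_counit coG_act.

End G.

Set Implicit Arguments. Unset Strict Implicit.

Section Mor.
Variables (k : comPzRingType) (D : datum k).
Local Notation C := (dC D).
Local Notation A := (dA D).

Lemma eps_bilin (N : lmodType k) : bilin (fun (c : C) (n : N) => epsC D c *: n).
Proof.
split=> [t|c] b u v /=; first by rewrite (@epsC_lin _ D) scalerDl scalerA.
by rewrite scalerDr scalerA mulrC -scalerA.
Qed.

Definition epsid (N : lmodType k) (y : tens C N) : N := tlift (fun c n => epsC D c *: n) y.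
Lemma epsid_tt (N : lmodType k) c (n : N) : epsid (tt c n) = epsC D c *: n.
Proof. exact: tlift_tt (eps_bilin N). Qed.
Lemma epsid_lin (N : lmodType k) : lin (@epsid N).
Proof. exact: tlift_lin (eps_bilin N). Qed.

Lemma epsid_act (N : lmodType k) (actN : N -> A -> N) (actNb : bilin actN) y a :
  epsid (actG actN y a) = actN (epsid y) a.
Proof.
have l1 : lin (fun y => epsid (actG actN y a)).
  exact: lin_comp (@epsid_lin N) (bil_l (actG_bilin actNb) a).
have l2 : lin (fun y => actN (epsid y) a).
  exact: lin_comp (bil_l actNb a) (@epsid_lin N).
apply: (lin_ext l1 l2) => c n /=.
rewrite (actG_tt actNb) /phiA (lin_sumE (@epsid_lin N)) epsid_tt (linZ (bil_l actNb a)).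
rewrite -{2}(coA_counit a) (lin_sumE (bil_r actNb n)) scaler_sumr.
apply: eq_bigr => q _; rewrite epsid_tt epsC_act (linZ (bil_r actNb n)) scalerA.
by [].
Qed.

Definition Gmap (N N' : lmodType k) (f : N -> N') (y : tens C N) : tens C N' :=
  tlift (fun c n => tt c (f n)) y.

Lemma Gmap_bil (N N' : lmodType k) (f : N -> N') : lin f -> bilin (fun (c : C) n => tt c (f n)).
Proof.
move=> fl; split=> [n|c] b u v /=; first by rewrite (bil_l (tt_bilin C N')).
by rewrite fl (bil_r (tt_bilin C N')).
Qed.
Lemma Gmap_tt (N N' : lmodType k) (f : N -> N') c n : lin f -> Gmap f (tt c n) = tt c (f n).
Proof. by move=> fl; exact: tlift_tt (Gmap_bil fl). Qed.
Lemma Gmap_lin (N N' : lmodType k) (f : N -> N') : lin f -> lin (Gmap f).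
Proof. by move=> fl; exact: tlift_lin (Gmap_bil fl). Qed.

Lemma epsid_Gmap (N N' : lmodType k) (f : N -> N') y : lin f -> epsid (Gmap f y) = f (epsid y).
Proof.
move=> fl.
apply: (lin_ext (lin_comp (@epsid_lin N') (Gmap_lin fl)) (lin_comp fl (@epsid_lin N))) => c n /=.
by rewrite Gmap_tt // !epsid_tt (linZ fl).
Qed.

Lemma coG_epsid (N : lmodType k) (y : tens C N) :
  y = \sum_(r <- coG y) tt r.1 (epsid r.2).
Proof.
have hb : bilin (fun (c : C) (t : tens C N) => tt c (epsid t)).
  split=> [t|c] b u v /=; first by rewrite (bil_l (tt_bilin C N)).
  by rewrite epsid_lin (bil_r (tt_bilin C N)).
transitivity (tsum2 (fun (c : C) (t : tens C N) => tt c (epsid t)) (coG y)); last by [].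
rewrite coG_sum.
apply: (lin_ext (@lin_id _ _) (tlift_lin (gf_bilin hb))) => c n /=.
rewrite tlift_tt; last exact: gf_bilin.
rewrite /gf.
under eq_bigr => q _ do rewrite epsid_tt (linZ (bil_r (tt_bilin C N) q.1)) -(linZ (bil_l (tt_bilin C N) n)).
by rewrite -(lin_sumE (bil_l (tt_bilin C N) n)) comC_counitr.
Qed.


Section GmapMor.
Variables (N : lmodType k) (actN : N -> A -> N).
Hypotheses (actNb : bilin actN) (actN1 : forall n, actN n 1 = n)
  (actNM : forall n a b, actN (actN n a) b = actN n (a * b)).
Variables (N' : lmodType k) (actN' : N' -> A -> N').
Hypotheses (actNb' : bilin actN') (actN1' : forall n, actN' n 1 = n)
  (actNM' : forall n a b, actN' (actN' n a) b = actN' n (a * b)).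

Lemma Gmap_mor (f : N -> N') : lin f -> (forall n a, f (actN n a) = actN' (f n) a) ->
  @dhmor k D (GN actNb actN1 actNM) (GN actNb' actN1' actNM') (Gmap f).
Proof.
move=> fl fa; split=> /=.
- exact: Gmap_lin.
- move=> m a.
  have l1 : lin (fun m => Gmap f (actG actN m a)).
    exact: lin_comp (Gmap_lin fl) (bil_l (actG_bilin actNb) a).
  have l2 : lin (fun m => actG actN' (Gmap f m) a).
    exact: lin_comp (bil_l (actG_bilin actNb') a) (Gmap_lin fl).
  apply: (lin_ext l1 l2) => c n /=.
  rewrite (actG_tt actNb) Gmap_tt // (actG_tt actNb') /phiA (lin_sumE (Gmap_lin fl)).
  by apply: eq_bigr => q _; rewrite Gmap_tt // fa.
- move=> m P g gb; rewrite coG_sum /tsum2 big_map /=.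
  have g'b : bilin (fun (c : C) (t : tens C N) => g c (Gmap f t)).
    split=> [t|c] b u v /=; first by rewrite (bil_l gb).
    by rewrite (Gmap_lin fl) (bil_r gb).
  rewrite -[RHS]/(tsum2 (fun (c : C) (t : tens C N) => g c (Gmap f t)) (coG m)) coG_sum.
  apply: (lin_ext (lin_comp (tlift_lin (gf_bilin gb)) (Gmap_lin fl)) (tlift_lin (gf_bilin g'b))) => c n /=.
  rewrite Gmap_tt // !tlift_tt; try exact: gf_bilin.
  by rewrite /gf; apply: eq_bigr => q _; rewrite Gmap_tt.
Qed.
End GmapMor.

Definition rhoM (M : dhmod D) (m : dM M) : tens C (dM M) := tcl (coM M m).

Lemma tcl_scale (X Y : lmodType k) a (s : seq (X * Y)) :
  tcl [seq (a *: p.1, p.2) | p <- s] = a *: tcl s.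
Proof.
rewrite tscaleE; apply: tcl_eq => P f fb.
by rewrite !tsum2_scale // tsum2_tcl.
Qed.

Lemma rho_mor (M : dhmod D) :
  @dhmor k D M (GN (actM_bilin M) (@actM1 _ _ M) (@actMM _ _ M)) (@rhoM M).
Proof.
split=> /=.
- move=> a m m'; rewrite /rhoM (tcl_eq (coM_lin a m m')) tcl_cat.
  by rewrite tcl_scale.
- move=> m a; rewrite /rhoM (tcl_eq (coM_act m a)) /actG tlift_tcl; last exact: phiA_bilin (actM_bilin M) a.
  by rewrite tcl_sum /tsum2 big_allpairs_dep.
- move=> m P f fb; rewrite /rhoM coG_sum tlift_tcl; last exact: gf_bilin.
  rewrite /tsum2 big_map /=.
  under [RHS]eq_bigr => p _ do rewrite tcl_sum (lin_sumE (bil_r fb _)).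
  have tb : trilin (fun x y z => f x (tt y z)).
    split=> [y z|y z|y z] b u v /=.
    - by rewrite (bil_l fb).
    - by rewrite (bil_l (tt_bilin C (dM M))) (bil_r fb).
    - by rewrite (bil_r (tt_bilin C (dM M))) (bil_r fb).
  by have := coM_coassoc m tb; rewrite /tsum3 !big_allpairs_dep /=.
Qed.

Lemma epsid_rho (M : dhmod D) (m : dM M) : epsid (rhoM m) = m.
Proof. by rewrite /epsid /rhoM tlift_tcl; [exact: coM_counit | exact: eps_bilin]. Qed.

End Mor.

Set Implicit Arguments. Unset Strict Implicit.

Section Fin.
Variables (k : comPzRingType) (D : datum k).
Local Notation C := (dC D).
Local Notation A := (dA D).

Definition GA : dhmod D := GN (mul_bilin A) (fun n => mulr1 n) (fun n a b => esym (mulrA n a b)).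
Definition GM (M : dhmod D) : dhmod D := GN (actM_bilin M) (@actM1 _ _ M) (@actMM _ _ M).

Lemma hmapGA (theta : C -> C -> A) : bilin theta -> forall c d,
  hmap theta GA c (tt d 1) =
  \sum_(q <- comC D d) \sum_(r <- coA D (theta c q.1)) tt (actC D q.2 r.1) r.2.
Proof.
move=> thb c d.
have gb : bilin (fun (x : C) (t : tens C A) => actG (fun x y => x * y) t (theta c x)).
  split=> [t|x] b u v /=; first by rewrite (bil_r thb) (bil_r (actG_bilin (mul_bilin A))).
  by rewrite (bil_l (actG_bilin (mul_bilin A))).
transitivity (tsum2 (fun (x : C) (t : tens C A) => actG (fun x y => x * y) t (theta c x))
  (coG (tt d 1))); first by [].
rewrite coG_tt // /gf; apply: eq_bigr => q _.
by rewrite (actG_tt (mul_bilin A)) /phiA; apply: eq_bigr => r _; rewrite mul1r.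
Qed.

Lemma recover (theta : C -> C -> A) : V3 theta -> forall c d,
  epsid (hmap theta GA c (tt d 1)) = theta c d.
Proof.
case=> thb _ th3 c d; rewrite hmapGA // (lin_sumE (@epsid_lin _ D A)).
under eq_bigr => q _ do rewrite (lin_sumE (@epsid_lin _ D A)).
under eq_bigr => q _ do under eq_bigr => r _ do rewrite epsid_tt.
have := th3 c d _ _ (eps_bilin D A); rewrite /tsum2 big_map big_allpairs_dep /= => <-.
rewrite -{2}(comC_counitl c) (lin_sumE (bil_l thb d)).
by apply: eq_bigr => p _; rewrite (linZ (bil_l thb d)).
Qed.

Lemma gmA (b : A) : @dhmor k D GA GA (Gmap (fun x : A => b * x)).
Proof.
apply: Gmap_mor; first exact: bil_r (mul_bilin A) b.
by move=> n a; rewrite mulrA.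
Qed.

Lemma gmM (M : dhmod D) (m : dM M) : @dhmor k D GA (GM M) (Gmap (actM M m)).
Proof.
apply: Gmap_mor; first exact: bil_r (actM_bilin M) m.
by move=> n a; rewrite actMM.
Qed.

Lemma surj (nu : nat_family D) : natV nu ->
  exists theta, V3 theta /\
    forall (M : dhmod D) (c : C) (m : dM M), nu M c m = hmap theta M c m.
Proof.
case=> nub nua nuc nun.
pose theta (c d : C) : A := epsid (nu GA c (tt d 1)).
have rep : forall M c m, nu M c m = hmap theta M c m.
  move=> M c m.
  rewrite -(epsid_rho (nu M c m)) (nun M (GM M) _ (rho_mor M) c m).
  have e : rhoM m = \sum_(r <- coM M m) Gmap (actM M r.2) (tt r.1 1).
    rewrite /rhoM tcl_sum; apply: eq_bigr => r _.
    by rewrite Gmap_tt ?actM1 //; exact: bil_r (actM_bilin M) r.2.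
  rewrite e (lin_sumE (bil_r (nub (GM M)) c)) (lin_sumE (@epsid_lin _ D _)) /hmap.
  apply: eq_bigr => r _.
  rewrite -(nun GA (GM M) _ (gmM r.2) c (tt r.1 1)) epsid_Gmap //.
  exact: bil_r (actM_bilin M) r.2.
have thb : bilin theta.
  split=> [d|c] b x y; rewrite /theta.
    by rewrite (bil_l (nub GA)) (@epsid_lin _ D _).
  by rewrite (bil_l (tt_bilin C A)) (bil_r (nub GA)) (@epsid_lin _ D _).
exists theta; split=> //; split=> //.
- move=> c d a; rewrite {1}/theta -(epsid_act (mul_bilin A)).
  have H : \sum_(p <- coA D a) nu GA (actC D c p.1) (actG (fun x y => x * y) (tt d 1) p.2)
     = actG (fun x y => x * y) (nu GA c (tt d 1)) a := nua GA c (tt d 1) a.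
  rewrite -H (lin_sumE (@epsid_lin _ D _)).
  have e2 : forall (e : C) (b : A), tt e (1 * b) = Gmap (fun x : A => b * x) (tt e 1).
    by move=> e b; rewrite Gmap_tt ?mul1r ?mulr1 //; exact: bil_r (mul_bilin A) b.
  transitivity (\sum_(p <- coA D a) \sum_(s <- coA D p.2) s.2 * theta (actC D c p.1) (actC D d s.1)).
    apply: eq_bigr => p _; rewrite (actG_tt (mul_bilin A)) /phiA.
    under eq_bigr => s _ do rewrite e2.
    rewrite (lin_sumE (bil_r (nub GA) _)) (lin_sumE (@epsid_lin _ D _)).
    apply: eq_bigr => s _.
    rewrite -(nun GA GA _ (gmA s.2)) epsid_Gmap //.
    exact: bil_r (mul_bilin A) s.2.
  have tb : trilin (fun h1 h2 b => b * theta (actC D c h1) (actC D d h2)).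
    split=> [y z|y z|y z] b u v /=.
    - by rewrite actC_r (bil_l thb) mul_r.
    - by rewrite actC_r (bil_r thb) mul_r.
    - by rewrite mul_l.
  by have := coA_coassoc a tb; rewrite /tsum3 !big_allpairs_dep /= => ->.
- move=> c d P f fb.
  rewrite /tsum2 big_map big_allpairs_dep /=.
  have hb : bilin (fun (c : C) (t : tens C A) => tt c (epsid t)).
    split=> [t|c'] b u v /=; first by rewrite (bil_l (tt_bilin C A)).
    by rewrite (@epsid_lin _ D _) (bil_r (tt_bilin C A)).
  have Y1 : nu GA c (tt d 1) = \sum_(p <- comC D c) tt p.1 (theta p.2 d).
    transitivity (tsum2 (fun (c : C) (t : tens C A) => tt c (epsid t))
      (coM GA (nu GA c (tt d 1)))); first exact: coG_epsid.
    by rewrite (nuc GA c (tt d 1) _ _ hb) /tsum2 big_map.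
  transitivity (tlift f (nu GA c (tt d 1))).
    rewrite Y1 (lin_sumE (tlift_lin fb)).
    by apply: eq_bigr => p _; rewrite tlift_tt.
  rewrite rep hmapGA // (lin_sumE (tlift_lin fb)); apply: eq_bigr => q _.
  rewrite (lin_sumE (tlift_lin fb)); apply: eq_bigr => r _.
  by rewrite tlift_tt.
Qed.

End Fin.

Unset Implicit Arguments. Set Strict Implicit.
Theorem theorem2p1p8 (k : comPzRingType) (D : datum k) :
  (forall theta : dC D -> dC D -> dA D, V3 theta -> natV (hmap theta)) /\
  (forall (a : k) (theta theta' : dC D -> dC D -> dA D),
     V3 theta -> V3 theta' ->
     forall (M : dhmod D) (c : dC D) (m : dM M),
       hmap (fun x y => a *: theta x y + theta' x y) M c m
       = a *: hmap theta M c m + hmap theta' M c m) /\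
  (forall theta theta' : dC D -> dC D -> dA D, V3 theta -> V3 theta' ->
     forall (M : dhmod D) (c : dC D) (m : dM M),
       hmap (prodV3 theta theta') M c m = prodV (hmap theta) (hmap theta') M c m) /\
  (is_hopf D ->
     (forall theta theta' : dC D -> dC D -> dA D, V3 theta -> V3 theta' ->
        (forall (M : dhmod D) (c : dC D) (m : dM M),
            hmap theta M c m = hmap theta' M c m) ->
        forall c d, theta c d = theta' c d) /\
     (forall nu : nat_family D, natV nu ->
        exists theta, V3 theta /\
          forall (M : dhmod D) (c : dC D) (m : dM M), nu M c m = hmap theta M c m)).
Proof.
split; first by move=> theta h; exact: natV_hmap.
split; first by move=> a theta theta' _ _ M c m; exact: hmap_lin.
split; first by move=> theta theta' h1 h2 M c m; exact: hmap_prod.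
move=> _; split.
- move=> theta theta' h1 h2 heq c d.
  by rewrite -(recover h1) -(recover h2) heq.
- exact: surj.
Qed.
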